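(* For every finite additive poset $A$, $h(A)\le\dim(A)\le wt(A)\le w(A)$.
   Context: An additive poset is a pair $(A,\le)$ where $A$ is an abelian group and $\le$ is a partial order on $A$ such that for all $a,b,c\in A$: $(\ast)$ if $b\le a$ and $c\le a$ then $b+c\le a$; $(\ast\ast)$ if $a\le b$ and $a\le c$ then $a\le a+b+c$. Such $A$ is a $\mathbb{Z}/2\mathbb{Z}$-vector space; $\dim(A)$ is its dimension. The height $h(A)$ is the maximal length $n$ of a chain $a_0<a_1<\cdots<a_n$ in $A$; the width $w(A)$ is the maximal cardinality of an antichain (set of pairwise incomparable elements); the weight $wt(A)$ is the number of atoms, where an atom is a nonzero $a$ with $\{x:x\le a\}=\{0,a\}$. *)

(* Defs.v *)
From HB Require Import structures.
From mathcomp Require Import all_boot all_order all_algebra.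
Set Implicit Arguments. Unset Strict Implicit. Unset Printing Implicit Defensive.
Import GRing.Theory.
Local Open Scope ring_scope.

(* An additive poset: a finite abelian group A with a partial order le
   satisfying the two axioms [star] and [star star] of the paper. *)
Definition additive_poset (A : finZmodType) (le : rel A) : Prop :=
  [/\ reflexive le, antisymmetric le, transitive le,
      (forall a b c : A, le b a -> le c a -> le (b + c) a) &
      (forall a b c : A, le a b -> le a c -> le a (a + b + c))].

Section AP.
Variables (A : finZmodType) (le : rel A).

Definition ltA (x y : A) := (x != y) && le x y.

Definition chainb (C : {set A}) : bool :=
  [forall x in C, forall y in C, le x y || le y x].

Definition antichainb (C : {set A}) : bool :=
  [forall x in C, forall y in C, (x != y) ==> ~~ le x y].

(* height: maximal n with a chain a_0 < a_1 < ... < a_n, i.e. a chain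
   with n+1 elements *)
Definition height : nat := \max_(C : {set A} | chainb C) (#|C|.-1)%N.

Definition width : nat := \max_(C : {set A} | antichainb C) #|C|.

Definition atoms : {set A} :=
  [set a | (a != 0) && ([set x | le x a] == [set 0; a])].

Definition weight : nat := #|atoms|.
End AP.

(* Linear independence over Z/2Z: no nonempty subset sums to zero. *)
Definition F2_independent (A : finZmodType) (B : {set A}) : bool :=
  [forall S : {set A}, (S \subset B) ==> ((\sum_(x in S) x == 0) ==> (S == set0))].

(* Dimension over Z/2Z: maximal size of a linearly independent set
   (meaningful since A is a Z/2Z-vector space). *)
Definition dimF2 (A : finZmodType) : nat :=
  \max_(B : {set A} | F2_independent B) #|B|.

(* Main.v *)
Require Import Defs.
From mathcomp Require Import all_boot all_order all_algebra.
Set Implicit Arguments. Unset Strict Implicit. Unset Printing Implicit Defensive.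
Import GRing.Theory.
Local Open Scope ring_scope.

Section Proof.
Variables (A : finZmodType) (le : rel A).
Hypothesis HA : additive_poset le.

Let refl : reflexive le. Proof. by case: HA. Qed.
Let anti : antisymmetric le. Proof. by case: HA. Qed.
Let trans : transitive le. Proof. by case: HA. Qed.
Let ax1 : forall a b c, le b a -> le c a -> le (b + c) a. Proof. by case: HA. Qed.
Let ax2 : forall a b c, le a b -> le a c -> le a (a + b + c). Proof. by case: HA. Qed.

Lemma char2 (a : A) : a + a = 0.
Proof.
have h1 : le (a + a) a by apply: ax1; apply: refl.
have h2 : le a (a + a + a) by apply: ax2; apply: refl.
have h3 : le (a + (a + a)) a by apply: ax1 => //; apply: refl.
have e : a = a + a + a by apply: anti; rewrite h2 -addrA h3.
by apply: (addrI a); rewrite addr0 addrA -e.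
Qed.

Lemma le0 (a : A) : le 0 a.
Proof. by rewrite -(char2 a); apply: ax1; apply: refl. Qed.

Lemma sum_le (S : {set A}) x :
  (forall y, y \in S -> le y x) -> le (\sum_(y in S) y) x.
Proof.
move=> H; apply: (big_ind (fun z => le z x)) => //; [exact: le0 | exact: ax1].
Qed.

Lemma sum_symD (S1 S2 : {set A}) :
  \sum_(x in S1) x + \sum_(x in S2) x = \sum_(x in (S1 :\: S2) :|: (S2 :\: S1)) x.
Proof.
rewrite (big_setID S2) (big_setID S1 (A := S2)) setIC addrACA char2 add0r.
rewrite -bigU; last first.
  by apply/pred0P => x /=; rewrite !inE; case: (x \in S1); case: (x \in S2).
by apply: eq_bigl => x; rewrite !inE.
Qed.

Definition rank (z : A) := #|[set w | le w z]|.

Lemma rank_lt x y : le y x -> y != x -> (rank y < rank x)%N.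
Proof.
move=> hyx nyx; apply: proper_card; apply/properP; split.
  by apply/subsetP => w; rewrite !inE => h; exact: trans h hyx.
exists x; rewrite !inE ?refl //; apply/negP => hxy.
by move/negP: nyx; apply; apply/eqP; apply: anti; rewrite hxy hyx.
Qed.

Lemma chain_max (T : {set A}) t0 :
  (forall x y, x \in T -> y \in T -> le x y || le y x) -> t0 \in T ->
  exists2 m, m \in T & forall y, y \in T -> le y m.
Proof.
move=> tot t0T; case: (arg_maxnP rank t0T) => m mT mmax.
exists m => // y yT; case/orP: (tot y m yT mT) => // hmy.
case: (eqVneq m y) => [<-|nmy]; first exact: refl.
by have := mmax y yT; rewrite /= leqNgt (rank_lt hmy nmy).
Qed.

Lemma chain_min (T : {set A}) t0 :
  (forall x y, x \in T -> y \in T -> le x y || le y x) -> t0 \in T ->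
  exists2 m, m \in T & forall y, y \in T -> le m y.
Proof.
move=> tot t0T; case: (arg_minnP rank t0T) => m mT mmin.
exists m => // y yT; case/orP: (tot y m yT mT) => // hmy.
case: (eqVneq y m) => [->|nmy]; first exact: refl.
by have := mmin y yT; rewrite /= leqNgt (rank_lt hmy nmy).
Qed.

Definition fs (S : {set A}) := \sum_(x in S) x.

Lemma span_atoms n a : (rank a < n)%N ->
  exists S : {set A}, S \subset atoms le /\ fs S = a.
Proof.
elim: n a => // n IH a ra.
case: (eqVneq a 0) => [->|a0].
  by exists set0; split; [apply: sub0set | rewrite /fs big_set0].
case: (boolP (a \in atoms le)) => na.
  by exists [set a]; split; [rewrite sub1set | rewrite /fs big_set1].
have hne : ~~ ([set x | le x a] == [set 0; a]) by move: na; rewrite inE a0.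
have : [exists x, [&& le x a, x != 0 & x != a]].
  apply: contraR hne => /existsPn hn; apply/eqP/setP => w; rewrite !inE.
  have := hn w.
  case: (eqVneq w 0) => [->|w0]; first by rewrite le0.
  case: (eqVneq w a) => [->|wa]; first by rewrite refl orbT.
  by rewrite /= !andbT => /negbTE ->.
case/existsP => x /and3P [xa x0 nxa].
have ya : le (a + x) a by apply: ax1; [exact: refl | exact: xa].
have nya : a + x != a by rewrite -[X in _ != X]addr0 (inj_eq (addrI a)).
have [Sx [Sxs ex]] := IH x (leq_trans (rank_lt xa nxa) ra).
have [Sy [Sys ey]] := IH (a + x) (leq_trans (rank_lt ya nya) ra).
exists ((Sx :\: Sy) :|: (Sy :\: Sx)); split.
  by rewrite subUset !(subset_trans (subsetDl _ _)).
by rewrite /fs -sum_symD -/(fs Sx) -/(fs Sy) ex ey addrCA char2 addr0.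
Qed.

Lemma card_le_atoms : (#|A| <= 2 ^ #|atoms le|)%N.
Proof.
rewrite -cardsT -card_powerset.
apply: leq_trans (leq_imset_card fs _).
apply: subset_leq_card; apply/subsetP => a _.
have [S [Ss <-]] := span_atoms (ltnSn (rank a)).
by apply: imset_f; rewrite inE.
Qed.

Lemma dim_le_weight : (dimF2 A <= weight le)%N.
Proof.
apply/bigmax_leqP => B indB.
have inj : {in powerset B &, injective fs}.
  move=> S1 S2; rewrite !inE => S1B S2B e.
  have : fs S1 + fs S2 = 0 by rewrite e char2.
  rewrite /fs sum_symD => /eqP s0.
  move/forallP: indB => /(_ ((S1 :\: S2) :|: (S2 :\: S1))) /implyP.
  rewrite subUset !(subset_trans (subsetDl _ _)) // => /(_ isT) /implyP /(_ s0).
  rewrite setU_eq0 !setD_eq0 => /andP [h1 h2].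
  by apply/eqP; rewrite eqEsubset h1 h2.
have : (2 ^ #|B| <= 2 ^ #|atoms le|)%N.
  rewrite -card_powerset -(card_in_imset inj).
  exact: leq_trans (max_card _) card_le_atoms.
by rewrite leq_exp2l.
Qed.

Lemma weight_le_width : (weight le <= width le)%N.
Proof.
apply: leq_bigmax_cond.
apply/forall_inP => x xa; apply/forall_inP => y ya; apply/implyP => nxy.
apply/negP => lxy.
move: xa ya; rewrite !inE => /andP [x0 _] /andP [y0 /eqP Dy].
have : x \in [set w | le w y] by rewrite inE.
by rewrite Dy !inE (negbTE x0) (negbTE nxy).
Qed.

Lemma height_le_dim : (height le <= dimF2 A)%N.
Proof.
apply/bigmax_leqP => C chC.
have tot : forall x y, x \in C -> y \in C -> le x y || le y x.
  by move=> x y xC yC; move/forall_inP: chC => /(_ x xC) /forall_inP /(_ y yC).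
case: (set_0Vmem C) => [->|[c1 c1C]]; first by rewrite cards0.
have [c0 c0C c0min] := chain_min tot c1C.
rewrite (cardsD1 c0) c0C /=.
apply: (@leq_bigmax_cond _ (fun B => F2_independent B) (fun B => #|B|)).
apply/forallP => S; apply/implyP => SB; apply/implyP => /eqP s0; apply/eqP.
case: (set_0Vmem S) => [//|[m0 m0S]]; exfalso.
have SC : forall y, y \in S -> y \in C /\ y != c0.
  by move=> y yS; move/subsetP: SB => /(_ y yS); rewrite !inE => /andP [].
have totS : forall x y, x \in S -> y \in S -> le x y || le y x.
  by move=> x y /SC [xC _] /SC [yC _]; apply: tot.
have [m mS mmax] := chain_max totS m0S.
set T := (S :\ m) :|: [set c0].
have TC : forall y, y \in T -> y \in C /\ y != m /\ le y m.
  move=> y; rewrite !inE => /orP [/andP [ym yS]|/eqP ->].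
    by have [yC _] := SC y yS; split => //; split => //; apply: mmax.
  have [mC mc0] := SC m mS.
  by split => //; split; [rewrite eq_sym | apply: c0min].
have totT : forall x y, x \in T -> y \in T -> le x y || le y x.
  by move=> x y /TC [xC _] /TC [yC _]; apply: tot.
have c0T : c0 \in T by rewrite !inE eqxx orbT.
have [x xT xmax] := chain_max totT c0T.
have hs : le (\sum_(y in S :\ m) y) x.
  by apply: sum_le => y yS; apply: xmax; rewrite inE yS.
have em : m = \sum_(y in S :\ m) y.
  move: s0; rewrite (big_setD1 m mS) /= => e.
  by apply: (addrI m); rewrite e char2.
have [_ [xm lxm]] := TC x xT.
by move/negP: xm; apply; apply/eqP; apply: anti; rewrite lxm -em in hs *; rewrite hs.
Qed.

End Proof.

Theorem theorem7p1 (A : finZmodType) (le : rel A) :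
  additive_poset le ->
  [/\ (height le <= dimF2 A)%N, (dimF2 A <= weight le)%N & (weight le <= width le)%N].
Proof.
move=> HA; split; [exact: height_le_dim | exact: dim_le_weight | exact: weight_le_width].
Qed.
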